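(* Let $\vec{\mathcal G}=([n],E)$ be an ergodic graph of a deterministic two-player mean-payoff game, suppose $r\in\mathcal P^{\sigma,\tau}$ for some $(\sigma,\tau)\in\Xi$, and let $\gamma$ satisfy $1>\gamma>1-\frac{1}{6n^2\Delta(r)}$. Then $(\sigma,\tau)$ is the unique pair of optimal policies in the discounted game with weights $r$ and discount factor $\gamma$. Consequently the Blackwell threshold satisfies $\gamma^*\le 1-\frac{1}{6n^2\Delta(r)}$.
   Context: Setting: directed graph $\vec{\mathcal G}=([n],E)$ without multiple edges, each vertex having an outgoing edge, $[n]=V_{\max}\uplus V_{\min}$, weights $r\in\mathbb R^E$. Ergodic equation in $(\lambda,u)$: $\lambda+u_i=\max_{(i,j)\in E}\{r_{ij}+u_j\}$ ($i\in V_{\max}$), $\lambda+u_i=\min_{(i,j)\in E}\{r_{ij}+u_j\}$ ($i\in V_{\min}$); $u$ is a bias if $(\lambda,u)$ solves it; ergodic graph: solvable for every $r$; $\lambda$ is the mean-payoff value. Policies $\sigma:V_{\max}\to[n]$, $\tau:V_{\min}\to[n]$ choose outgoing edges; a pair is bias-induced if some bias makes each chosen edge attain the max/min. $\Xi$: pairs whose induced subgraph has exactly one directed cycle; $\mathcal P^{\sigma,\tau}$: set of $r$ for which $(\sigma,\tau)$ is the only bias-induced pair. Condition number: $\Delta(r)=\dfrac{\max\{|r_{ij}-\lambda|:(i,j)\in E\}}{\min\{|r_{ij}-\lambda+u_j-u_i|:(i,j)\in E,\ r_{ij}-\lambda+u_j-u_i\ne0\}}$ ($\Delta=1$ if the denominator's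 set is empty). Discounted game with factor $\gamma\in(0,1)$: along play $i_0,i_1,\dots$ Max receives $(1-\gamma)\sum_{t\ge0}\gamma^t r_{i_ti_{t+1}}$; its value $\lambda^{(\gamma)}\in\mathbb R^n$ is the unique solution of $\lambda^{(\gamma)}_i=\max_{(i,j)\in E}\{(1-\gamma)r_{ij}+\gamma\lambda^{(\gamma)}_j\}$ ($i\in V_{\max}$), $\lambda^{(\gamma)}_i=\min_{(i,j)\in E}\{(1-\gamma)r_{ij}+\gamma\lambda^{(\gamma)}_j\}$ ($i\in V_{\min}$); a policy is optimal iff it uses edges attaining these maxima (resp. minima). The Blackwell threshold $\gamma^*$ is the smallest $\gamma^*\in(0,1)$ such that any policy optimal for some $\gamma\in(\gamma^*,1)$ is optimal for all $\gamma\in(\gamma^*,1)$. *)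

(* Defs.v *)
From HB Require Import structures.
From mathcomp Require Import all_boot all_order all_algebra.
From mathcomp Require Import reals.
Set Implicit Arguments. Unset Strict Implicit. Unset Printing Implicit Defensive.
Import Order.TTheory GRing.Theory Num.Theory.
Local Open Scope ring_scope.

Section MeanPayoff.
Context {R : realType} {n : nat}.
(* Graph: vertices 'I_n, edge relation E; Vmax : pred 'I_n (Vmin = complement);
   weights r : 'I_n -> 'I_n -> R (only the values on edges matter). *)
Variables (E : rel 'I_n) (Vmax : pred 'I_n) (r : 'I_n -> 'I_n -> R).

Definition attains_max (i : 'I_n) (f : 'I_n -> R) (v : R) : Prop :=
  (exists2 j, E i j & f j = v) /\ (forall j, E i j -> f j <= v).
Definition attains_min (i : 'I_n) (f : 'I_n -> R) (v : R) : Prop :=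
  (exists2 j, E i j & f j = v) /\ (forall j, E i j -> v <= f j).

Definition ergodic_sol (lam : R) (u : 'I_n -> R) : Prop :=
  forall i, if Vmax i then attains_max i (fun j => r i j + u j) (lam + u i)
            else attains_min i (fun j => r i j + u j) (lam + u i).

Definition disc_value (gamma : R) (v : 'I_n -> R) : Prop :=
  forall i, if Vmax i then attains_max i (fun j => (1 - gamma) * r i j + gamma * v j) (v i)
            else attains_min i (fun j => (1 - gamma) * r i j + gamma * v j) (v i).

Definition reduced_weight (lam : R) (u : 'I_n -> R) (i j : 'I_n) : R :=
  r i j - lam + u j - u i.

Definition Delta (lam : R) (u : 'I_n -> R) : R :=
  let num := \big[Num.max/0]_(i : 'I_n) \big[Num.max/0]_(j : 'I_n | E i j) `|r i j - lam| in
  let s := [seq `|reduced_weight lam u p.1 p.2| |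
             p <- [seq p <- enum [set: 'I_n * 'I_n] |
                     E p.1 p.2 && (reduced_weight lam u p.1 p.2 != 0)]] in
  if s is x :: s' then num / foldr Num.min x s' else 1.

End MeanPayoff.

Section Policies.
Context {R : realType} {n : nat}.
Variables (E : rel 'I_n) (Vmax : pred 'I_n) (r : 'I_n -> 'I_n -> R).

Definition ergodic_graph_over (R' : realType) : Prop :=
  forall w : 'I_n -> 'I_n -> R', exists (lam : R') (u : 'I_n -> R'), ergodic_sol E Vmax w lam u.

(* A pair of policies (σ,τ) is encoded as one map pol : 'I_n -> 'I_n with
   σ = pol on Vmax and τ = pol on Vmin. *)
Definition policy_pair (pol : 'I_n -> 'I_n) : Prop := forall i, E i (pol i).
Definition max_policy (sigma : 'I_n -> 'I_n) : Prop :=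
  forall i, Vmax i -> E i (sigma i).
Definition min_policy (tau : 'I_n -> 'I_n) : Prop :=
  forall i, ~~ Vmax i -> E i (tau i).

Definition bias_induced (pol : 'I_n -> 'I_n) : Prop :=
  exists lam u, ergodic_sol E Vmax r lam u /\
    forall i, r i (pol i) + u (pol i) = lam + u i.

(* Ξ : the subgraph ([n], {(i, pol i)}) has exactly one directed cycle
   (directed cycles identified up to cyclic rotation). *)
Definition is_dcycle (pol : 'I_n -> 'I_n) (c : seq 'I_n) : Prop :=
  [/\ c != [::], uniq c & cycle (frel pol) c].
Definition in_Xi (pol : 'I_n -> 'I_n) : Prop :=
  exists c, is_dcycle pol c /\
    forall c', is_dcycle pol c' -> exists k, c' = rot k c.

Definition in_P (pol : 'I_n -> 'I_n) : Prop :=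
  bias_induced pol /\
  forall pol', policy_pair pol' -> bias_induced pol' -> forall i, pol' i = pol i.

Definition pair_attains (gamma : R) (v : 'I_n -> R) (pol : 'I_n -> 'I_n) : Prop :=
  forall i, v i = (1 - gamma) * r i (pol i) + gamma * v (pol i).

Definition unique_optimal_pair (gamma : R) (pol : 'I_n -> 'I_n) : Prop :=
  (exists v, disc_value E Vmax r gamma v) /\
  forall v, disc_value E Vmax r gamma v ->
    pair_attains gamma v pol /\
    forall pol', policy_pair pol' -> pair_attains gamma v pol' ->
      forall i, pol' i = pol i.

Definition max_optimal (gamma : R) (sigma : 'I_n -> 'I_n) : Prop :=
  exists v, disc_value E Vmax r gamma v /\
    forall i, Vmax i -> v i = (1 - gamma) * r i (sigma i) + gamma * v (sigma i).
Definition min_optimal (gamma : R) (tau : 'I_n -> 'I_n) : Prop :=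
  exists v, disc_value E Vmax r gamma v /\
    forall i, ~~ Vmax i -> v i = (1 - gamma) * r i (tau i) + gamma * v (tau i).

Definition blackwell_property (g : R) : Prop :=
  (forall sigma, max_policy sigma ->
     (exists gamma, g < gamma < 1 /\ max_optimal gamma sigma) ->
     forall gamma, g < gamma < 1 -> max_optimal gamma sigma) /\
  (forall tau, min_policy tau ->
     (exists gamma, g < gamma < 1 /\ min_optimal gamma tau) ->
     forall gamma, g < gamma < 1 -> min_optimal gamma tau).

Definition blackwell_threshold (gs : R) : Prop :=
  0 < gs < 1 /\ blackwell_property gs /\
  forall g, 0 < g < 1 -> blackwell_property g -> gs <= g.

End Policies.

(* Main.v *)
Require Import Defs.
From HB Require Import structures.
From mathcomp Require Import all_boot all_order all_algebra.
From mathcomp Require Import reals.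
From mathcomp Require Import ring lra zify.
Set Implicit Arguments. Unset Strict Implicit. Unset Printing Implicit Defensive.
Import Order.TTheory GRing.Theory Num.Theory.
Local Open Scope ring_scope.
Lemma le_bigmaxr (R : realType) (I : eqType) (s : seq I) (P : pred I) (F : I -> R) x :
  x \in s -> P x -> F x <= \big[Num.max/0]_(i <- s | P i) F i.
Proof.
elim: s => [//|y s IH]; rewrite inE big_cons => /orP[/eqP <- ->|xs Px].
  by rewrite le_max lexx.
case: (P y); last exact: IH.
by rewrite le_max IH ?orbT.
Qed.

Lemma bigmax_ler (R : realType) (I : eqType) (s : seq I) (P : pred I) (F : I -> R) c :
  0 <= c -> (forall i, P i -> F i <= c) -> \big[Num.max/0]_(i <- s | P i) F i <= c.
Proof.
move=> c0 H; elim: s => [|y s IH]; first by rewrite big_nil.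
rewrite big_cons; case Py: (P y) => //.
by rewrite ge_max IH H.
Qed.

Lemma bigmax_ge0 (R : realType) (I : eqType) (s : seq I) (P : pred I) (F : I -> R) :
  0 <= \big[Num.max/0]_(i <- s | P i) F i.
Proof.
elim: s => [|y s IH]; first by rewrite big_nil.
rewrite big_cons; case: (P y) => //; by rewrite le_max IH orbT.
Qed.

Lemma foldr_min_le (R : realType) (s : seq R) x y : y \in x :: s -> foldr Num.min x s <= y.
Proof.
elim: s y => [|z s IH] y /=; first by rewrite inE => /eqP ->.
rewrite !inE => /orP[/eqP->|/orP[/eqP->|ys]].
- by rewrite ge_min (IH x) ?inE ?eqxx ?orbT.
- by rewrite ge_min lexx.
- by rewrite ge_min (IH y) ?inE ?ys ?orbT.
Qed.

Lemma foldr_min_mem (R : realType) (s : seq R) x : foldr Num.min x s \in x :: s.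
Proof.
elim: s => [|z s IH] /=; first by rewrite inE.
rewrite /Num.min; case: ifP => _; rewrite !inE ?eqxx ?orbT //.
by move: IH; rewrite inE => /orP[->|->]; rewrite ?orbT.
Qed.
Definition numM (R : realType) (n : nat) (E : rel 'I_n) (r : 'I_n -> 'I_n -> R) (lam : R) :=
  \big[Num.max/0]_(i : 'I_n) \big[Num.max/0]_(j : 'I_n | E i j) `|r i j - lam|.

Lemma numM_ge (R : realType) (n : nat) (E : rel 'I_n) (r : 'I_n -> 'I_n -> R) lam i j :
  E i j -> `|r i j - lam| <= numM E r lam.
Proof.
move=> Eij; rewrite /numM.
apply: (le_trans _ (le_bigmaxr (fun i => \big[Num.max/0]_(j : 'I_n | E i j) `|r i j - lam|)
   (P := xpredT) (mem_index_enum i) (erefl true))).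
exact: (le_bigmaxr (fun j => `|r i j - lam|) (mem_index_enum j) Eij).
Qed.

Lemma numM_ge0 (R : realType) (n : nat) (E : rel 'I_n) (r : 'I_n -> 'I_n -> R) lam :
  0 <= numM E r lam.
Proof. exact: bigmax_ge0. Qed.

Lemma Delta_cases (R : realType) (n : nat) (E : rel 'I_n) (r : 'I_n -> 'I_n -> R) lam u :
  ((forall i j, E i j -> reduced_weight r lam u i j = 0) /\ Delta E r lam u = 1)
  \/ exists m0, 0 < m0 /\ Delta E r lam u = numM E r lam / m0 /\
     (forall i j, E i j -> reduced_weight r lam u i j != 0 ->
        m0 <= `|reduced_weight r lam u i j|) /\
     exists i j, E i j /\ m0 = `|reduced_weight r lam u i j|.
Proof.
rewrite /Delta -/(numM E r lam).
set fl := [seq p <- _ | _].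
have memfl : forall i j, E i j -> reduced_weight r lam u i j != 0 -> (i, j) \in fl.
  by move=> i j Eij nz; rewrite mem_filter /= Eij nz mem_enum in_setT.
case Hs: [seq _ | p <- fl] => [|x s'].
  left; split => // i j Eij; apply/eqP; apply/negPn/negP => nz.
  by have := memfl i j Eij nz; move: Hs; case: (fl) => // a l.
right; exists (foldr Num.min x s').
have memS : forall y, y \in x :: s' -> exists i j, E i j /\ reduced_weight r lam u i j != 0 /\
   y = `|reduced_weight r lam u i j|.
  move=> y; rewrite -Hs => /mapP[[i j]]; rewrite mem_filter /= => /andP[/andP[Eij nz] _] ->.
  by exists i, j.
have [i [j [Eij [nz m0E]]]] := memS _ (foldr_min_mem s' x).
split; first by rewrite m0E normr_gt0.
split => //; split; last by exists i, j.
move=> a b Eab nzab; apply: foldr_min_le; rewrite -Hs.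
by apply/mapP; exists (a, b) => //; apply: memfl.
Qed.
Lemma erg_tight (R : realType) (n : nat) (E : rel 'I_n) (Vmax : pred 'I_n)
    (r : 'I_n -> 'I_n -> R) lam u i :
  ergodic_sol E Vmax r lam u -> exists2 j, E i j & r i j + u j = lam + u i.
Proof. by move=> /(_ i); case: (Vmax i) => -[]. Qed.

Lemma pol_tight (R : realType) (n : nat) (E : rel 'I_n) (Vmax : pred 'I_n)
    (r : 'I_n -> 'I_n -> R) pol lam u :
  in_P E Vmax r pol -> ergodic_sol E Vmax r lam u ->
  forall i, r i (pol i) + u (pol i) = lam + u i.
Proof.
move=> [_ Huniq] Herg.
pose p2 i := odflt (pol i) [pick j | E i j && (r i j + u j == lam + u i)].
have p2P : forall i, E i (p2 i) /\ r i (p2 i) + u (p2 i) = lam + u i.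
  move=> i; rewrite /p2; case: pickP => [j /andP[Eij /eqP H]|H] //=.
  have [j Eij Hj] := erg_tight i Herg.
  by have := H j; rewrite Eij Hj eqxx.
have := Huniq p2 (fun i => (p2P i).1).
move=> /(_ _) H i; rewrite -(H _ i); first exact: (p2P i).2.
by exists lam, u; split => // k; exact: (p2P k).2.
Qed.

Lemma pol_strict (R : realType) (n : nat) (E : rel 'I_n) (Vmax : pred 'I_n)
    (r : 'I_n -> 'I_n -> R) pol lam u :
  policy_pair E pol -> in_P E Vmax r pol -> ergodic_sol E Vmax r lam u ->
  forall i j, E i j -> j != pol i -> reduced_weight r lam u i j != 0.
Proof.
move=> Hpp HP Herg i j Eij njp; apply/negP => /eqP H0.
have Ht := pol_tight HP Herg.
pose p2 k := if k == i then j else pol k.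
have := HP.2 p2 _ _ i; rewrite /p2 eqxx => H; move/eqP: njp; apply; apply: H.
  by move=> k; rewrite /p2; case: eqP => [->|]. 
exists lam, u; split => // k; rewrite /p2; case: eqP => [->|_]; last exact: Ht.
by move: H0; rewrite /reduced_weight => H0; apply/eqP; rewrite -subr_eq0 -H0; apply/eqP; ring.
Qed.

Lemma rw_sign (R : realType) (n : nat) (E : rel 'I_n) (Vmax : pred 'I_n)
    (r : 'I_n -> 'I_n -> R) lam u i j :
  ergodic_sol E Vmax r lam u -> E i j ->
  if Vmax i then reduced_weight r lam u i j <= 0 else 0 <= reduced_weight r lam u i j.
Proof.
move=> /(_ i) H Eij; rewrite /reduced_weight; case: (Vmax i) H => -[_ H];
  by have := H j Eij; lra.
Qed.
Lemma cyc_facts (n : nat) (pol : 'I_n -> 'I_n) : in_Xi pol ->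
  exists c : seq 'I_n, [/\ (0 < size c)%N, (size c <= n)%N,
    (forall x, x \in c -> pol x \in c),
    (forall x, x \in c -> iter (size c) pol x = x) &
    (forall x y, x \in c -> y \in c -> (exists2 k, (k < size c)%N & y = iter k pol x)) /\
    (forall i, iter n pol i \in c)].
Proof.
move=> [c [[cn0 cu cc] Hc]]; exists c; split.
- by case: (c) cn0.
- by rewrite -(card_uniqP cu); apply: leq_trans (max_card _) _; rewrite card_ord.
- by move=> x xc; apply: (mem_fcycle cc).
- by move=> x xc; rewrite -(order_cycle cc cu xc) (iter_order_cycle cc xc xc).
split.
  move=> x y xc yc; have Hf : fconnect pol x y by rewrite (fconnect_cycle cc xc).
  exists (findex pol x y); last by rewrite (iter_findex Hf).
  by rewrite -(order_cycle cc cu xc) findex_max.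
move=> i.
have ordn : (order pol i <= n)%N by rewrite /order; apply: leq_trans (max_card _) _; rewrite card_ord.
have /trajectP[j jlt Hj] := looping_order pol i.
set x := iter n pol i.
have Hx : iter (order pol i - j) pol x = x.
  rewrite /x -iterD.
  have -> : (order pol i - j + n = (n - j) + order pol i)%N by lia.
  by rewrite iterD Hj -iterD subnK //; lia.
have cyc : fcycle pol (orbit pol x).
  by apply: (iffLR (orbitPcycle 3 0)); exists (order pol i - j).-1; rewrite prednK ?subn_gt0.
have dc : is_dcycle pol (orbit pol x).
  split; [apply/eqP => H0; have := order_gt0 pol x; by rewrite -size_orbit H0 | exact: orbit_uniq | exact: cyc].
have [k Hk] := Hc (orbit pol x) dc.
by rewrite -(mem_rot k) -Hk in_orbit.
Qed.
Definition Ag (R : realType) (g : R) (L : nat) := \sum_(t < L) g ^+ t.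
Definition Yc (R : realType) (n : nat) (phi : 'I_n -> 'I_n) (u : 'I_n -> R) (g : R) (L : nat) x :=
  (\sum_(t < L) g ^+ t * u (iter t phi x)) / Ag g L.
Definition yv (R : realType) (n : nat) (phi : 'I_n -> 'I_n) (u : 'I_n -> R) (g : R) (L : nat) i :=
  (1 - g) * \sum_(t < n) g ^+ t * u (iter t phi i) + g ^+ n * Yc phi u g L (iter n phi i).

Lemma u_iter_bound (R : realType) (n : nat) (phi : 'I_n -> 'I_n) (u : 'I_n -> R) (M : R) :
  (forall i, `|u i - u (phi i)| <= M) -> forall t x, `|u x - u (iter t phi x)| <= t%:R * M.
Proof.
move=> HM; elim=> [|t IH] x /=; first by rewrite subrr normr0 mul0r.
have -> : u x - u (phi (iter t phi x)) =
   (u x - u (iter t phi x)) + (u (iter t phi x) - u (phi (iter t phi x))) by ring.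
apply: le_trans (ler_normD _ _) _.
by rewrite -addn1 natrD mulrDl mul1r lerD.
Qed.

Lemma geom (R : realType) (g : R) L : (1 - g) * Ag g L = 1 - g ^+ L.
Proof.
rewrite /Ag; elim: L => [|L IH]; first by rewrite big_ord0 mulr0 expr0 subrr.
by rewrite big_ord_recr /= mulrDr IH exprS; ring.
Qed.

Lemma Ag_ge1 (R : realType) (g : R) L : 0 <= g -> (0 < L)%N -> 1 <= Ag g L.
Proof.
move=> g0; case: L => // L _; rewrite /Ag big_ord_recl expr0 lerDl.
by apply: sumr_ge0 => t _; rewrite exprn_ge0.
Qed.

Lemma sum_shift (R : realType) (g : R) (F : nat -> R) m :
  \sum_(t < m.+1) g ^+ t * F t = F 0%N + g * \sum_(t < m) g ^+ t * F t.+1.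
Proof.
rewrite big_ord_recl expr0 mul1r mulr_sumr; congr (_ + _).
by apply: eq_bigr => t _; rewrite lift0 exprS mulrA.
Qed.

Lemma sum_last (R : realType) (g : R) (F : nat -> R) m :
  \sum_(t < m.+1) g ^+ t * F t = \sum_(t < m) g ^+ t * F t + g ^+ m * F m.
Proof. by rewrite big_ord_recr. Qed.

Lemma Yc_eq (R : realType) (n : nat) (phi : 'I_n -> 'I_n) (u : 'I_n -> R) (g : R) L x :
  0 <= g -> (0 < L)%N -> iter L phi x = x ->
  Yc phi u g L x = (1 - g) * u x + g * Yc phi u g L (phi x).
Proof.
move=> g0 L0 HL.
have Anz : Ag g L != 0 by rewrite gt_eqF // (lt_le_trans ltr01) // Ag_ge1.
have H1 := sum_shift g (fun t => u (iter t phi x)) L.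
have H2 := sum_last g (fun t => u (iter t phi x)) L.
rewrite /= HL in H2.
have Hs : \sum_(t < L) g ^+ t * u (iter t phi (phi x)) =
          \sum_(t < L) g ^+ t * u (iter t.+1 phi x).
  by apply: eq_bigr => t _; rewrite iterSr.
rewrite /Yc Hs.
have -> : \sum_(t < L) g ^+ t * u (iter t phi x) =
   (1 - g ^+ L) * u x + g * \sum_(t < L) g ^+ t * u (iter t.+1 phi x).
  by rewrite -[X in X = _](addrK (g ^+ L * u x)) -H2 H1 /=; ring.
rewrite -geom; field; exact: Anz.
Qed.

Lemma yv_eq (R : realType) (n : nat) (phi : 'I_n -> 'I_n) (u : 'I_n -> R) (g : R) L i :
  0 <= g -> (0 < L)%N -> iter L phi (iter n phi i) = iter n phi i ->
  yv phi u g L i = (1 - g) * u i + g * yv phi u g L (phi i).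
Proof.
move=> g0 L0 HL.
have H1 := sum_shift g (fun t => u (iter t phi i)) n.
have H2 := sum_last g (fun t => u (iter t phi i)) n.
have Hs : \sum_(t < n) g ^+ t * u (iter t phi (phi i)) =
          \sum_(t < n) g ^+ t * u (iter t.+1 phi i).
  by apply: eq_bigr => t _; rewrite iterSr.
have Hn : iter n phi (phi i) = phi (iter n phi i) by rewrite -iterSr iterS.
rewrite /yv Hs Hn (Yc_eq u g0 L0 HL).
move: H1 H2 => /= H1 H2.
have E1 : \sum_(t < n) g ^+ t * u (iter t phi i) =
  u i + g * \sum_(t < n) g ^+ t * u (iter t.+1 phi i) - g ^+ n * u (iter n phi i).
  by rewrite -[X in X = _](addrK (g ^+ n * u (iter n phi i))) -H2 H1 /=; ring.
rewrite E1; ring.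
Qed.

Lemma Yc_near (R : realType) (n : nat) (phi : 'I_n -> 'I_n) (u : 'I_n -> R) (M g : R) L x :
  (forall i, `|u i - u (phi i)| <= M) -> 0 <= g -> (0 < L)%N ->
  `|u x - Yc phi u g L (phi x)| <= L%:R * M.
Proof.
move=> HM g0 L0.
have Apos : 0 < Ag g L by rewrite (lt_le_trans ltr01) // Ag_ge1.
have -> : u x - Yc phi u g L (phi x) =
   (\sum_(t < L) g ^+ t * (u x - u (iter t phi (phi x)))) / Ag g L.
  have -> : \sum_(t < L) g ^+ t * (u x - u (iter t phi (phi x))) =
     u x * Ag g L - \sum_(t < L) g ^+ t * u (iter t phi (phi x)).
    by rewrite /Ag mulr_sumr -sumrB; apply: eq_bigr => t _; ring.
  rewrite /Yc; field; by rewrite gt_eqF.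
rewrite normrM normfV (gtr0_norm Apos) ler_pdivrMr //.
apply: le_trans (ler_norm_sum _ _ _) _.
rewrite /Ag mulr_sumr; apply: ler_sum => t _.
rewrite normrM ger0_norm ?exprn_ge0 // mulrC ler_wpM2r ?exprn_ge0 //.
rewrite -iterSr; apply: le_trans (u_iter_bound HM _ _) _.
apply: ler_wpM2r; first exact: le_trans (normr_ge0 _) (HM x).
by rewrite ler_nat.
Qed.
Lemma Yc_step (R : realType) (n : nat) (phi : 'I_n -> 'I_n) (u : 'I_n -> R) (M g : R) L x :
  (forall i, `|u i - u (phi i)| <= M) -> 0 <= g -> g <= 1 -> (0 < L)%N -> iter L phi x = x ->
  `|Yc phi u g L x - Yc phi u g L (phi x)| <= (1 - g) * (L%:R * M).
Proof.
move=> HM g0 g1 L0 HL.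
rewrite {1}(Yc_eq u g0 L0 HL).
have -> : (1 - g) * u x + g * Yc phi u g L (phi x) - Yc phi u g L (phi x) =
  (1 - g) * (u x - Yc phi u g L (phi x)) by ring.
rewrite normrM ger0_norm ?subr_ge0 //; apply: ler_wpM2l; first by rewrite subr_ge0.
exact: Yc_near.
Qed.

Lemma Yc_steps (R : realType) (n : nat) (phi : 'I_n -> 'I_n) (u : 'I_n -> R) (M g : R) (c : seq 'I_n) x :
  (forall i, `|u i - u (phi i)| <= M) -> 0 <= g -> g <= 1 -> (0 < size c)%N ->
  (forall x, x \in c -> phi x \in c) -> (forall x, x \in c -> iter (size c) phi x = x) ->
  x \in c -> forall k,
  `|Yc phi u g (size c) x - Yc phi u g (size c) (iter k phi x)| <= k%:R * ((1 - g) * ((size c)%:R * M)).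
Proof.
move=> HM g0 g1 L0 Hcl Hper xc; elim=> [|k IH] /=; first by rewrite subrr normr0 mul0r.
have ikc : iter k phi x \in c by elim: (k) => //= m IHm; apply: Hcl.
have -> : Yc phi u g (size c) x - Yc phi u g (size c) (phi (iter k phi x)) =
  (Yc phi u g (size c) x - Yc phi u g (size c) (iter k phi x)) +
  (Yc phi u g (size c) (iter k phi x) - Yc phi u g (size c) (phi (iter k phi x))) by ring.
apply: le_trans (ler_normD _ _) _.
rewrite -addn1 natrD mulrDl mul1r lerD //.
by apply: (Yc_step HM g0 g1 L0); apply: Hper.
Qed.

Lemma u_diam (R : realType) (n : nat) (phi : 'I_n -> 'I_n) (u : 'I_n -> R) (M : R) (c : seq 'I_n) :
  (forall i, `|u i - u (phi i)| <= M) -> (size c <= n)%N ->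
  (forall x y, x \in c -> y \in c -> (exists2 k, (k < size c)%N & y = iter k phi x)) ->
  (forall i, iter n phi i \in c) ->
  forall a b t, (t <= n)%N -> `|u (iter t phi a) - u (iter t phi b)| <= 3%:R * n%:R * M.
Proof.
move=> HM Ln Hconn Hreach a b t tn.
have M0 : 0 <= M by apply: le_trans (normr_ge0 _) (HM a).
have Hit : forall z, iter n phi z = iter (n - t) phi (iter t phi z).
  by move=> z; rewrite -iterD subnK.
have Ba : `|u (iter t phi a) - u (iter n phi a)| <= n%:R * M.
  rewrite Hit; apply: le_trans (u_iter_bound HM _ _) _.
  by apply: ler_wpM2r => //; rewrite ler_nat leq_subr.
have Bb : `|u (iter t phi b) - u (iter n phi b)| <= n%:R * M.
  rewrite Hit; apply: le_trans (u_iter_bound HM _ _) _.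
  by apply: ler_wpM2r => //; rewrite ler_nat leq_subr.
have [k kL Hk] := Hconn _ _ (Hreach a) (Hreach b).
have Bab : `|u (iter n phi a) - u (iter n phi b)| <= n%:R * M.
  rewrite Hk; apply: le_trans (u_iter_bound HM _ _) _.
  by apply: ler_wpM2r => //; rewrite ler_nat (leq_trans (ltnW kL)).
have -> : u (iter t phi a) - u (iter t phi b) =
  (u (iter t phi a) - u (iter n phi a)) + (u (iter n phi a) - u (iter n phi b))
   - (u (iter t phi b) - u (iter n phi b)) by ring.
apply: le_trans (ler_normB _ _) _.
apply: le_trans (lerD (ler_normD _ _) (lexx _)) _.
have -> : 3%:R * n%:R * M = n%:R * M + n%:R * M + n%:R * M by ring.
by rewrite !lerD.
Qed.
Lemma yv_bound (R : realType) (n : nat) (phi : 'I_n -> 'I_n) (u : 'I_n -> R) (M g : R) (c : seq 'I_n) :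
  (forall i, `|u i - u (phi i)| <= M) -> 0 <= g -> g <= 1 -> (0 < size c)%N -> (size c <= n)%N ->
  (forall x, x \in c -> phi x \in c) -> (forall x, x \in c -> iter (size c) phi x = x) ->
  (forall x y, x \in c -> y \in c -> (exists2 k, (k < size c)%N & y = iter k phi x)) ->
  (forall i, iter n phi i \in c) ->
  forall a b, `|yv phi u g (size c) a - yv phi u g (size c) b| <= (1 - g) * (4%:R * n%:R ^+ 2 * M).
Proof.
move=> HM g0 g1 L0 Ln Hcl Hper Hconn Hreach a b.
have M0 : 0 <= M by apply: le_trans (normr_ge0 _) (HM a).
have g1' : 0 <= 1 - g by rewrite subr_ge0.
set L := size c.
have -> : yv phi u g L a - yv phi u g L b =
  (1 - g) * \sum_(t < n) g ^+ t * (u (iter t phi a) - u (iter t phi b)) +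
  g ^+ n * (Yc phi u g L (iter n phi a) - Yc phi u g L (iter n phi b)).
  have -> : \sum_(t < n) g ^+ t * (u (iter t phi a) - u (iter t phi b)) =
     \sum_(t < n) g ^+ t * u (iter t phi a) - \sum_(t < n) g ^+ t * u (iter t phi b).
    by rewrite -sumrB; apply: eq_bigr => t _; ring.
  rewrite /yv; ring.
apply: le_trans (ler_normD _ _) _.
have -> : (1 - g) * (4%:R * n%:R ^+ 2 * M) =
   (1 - g) * (n%:R * (3%:R * n%:R * M)) + (1 - g) * (n%:R * (n%:R * M)) by ring.
apply: lerD.
  rewrite normrM ger0_norm //; apply: ler_wpM2l => //.
  apply: le_trans (ler_norm_sum _ _ _) _.
  have -> : n%:R * (3%:R * n%:R * M) = \sum_(t < n) (3%:R * n%:R * M : R).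
    by rewrite sumr_const card_ord mulr_natl.
  apply: ler_sum => t _; rewrite normrM ger0_norm ?exprn_ge0 //.
  rewrite -[X in _ <= X]mul1r; apply: ler_pM => //; first by rewrite exprn_ge0.
  - exact: exprn_ile1.
  - by apply: (u_diam HM Ln Hconn Hreach); apply: ltnW.
rewrite normrM ger0_norm ?exprn_ge0 //.
have [k kL Hk] := Hconn _ _ (Hreach a) (Hreach b).
rewrite Hk -[X in _ <= X]mul1r; apply: ler_pM => //; first by rewrite exprn_ge0.
  exact: exprn_ile1.
apply: le_trans (Yc_steps HM g0 g1 L0 Hcl Hper (Hreach a) k) _.
have kn : (k%:R : R) <= n%:R by rewrite ler_nat (leq_trans (ltnW kL)).
have Lnr : (L%:R : R) <= n%:R by rewrite ler_nat.
have -> : (k%:R * ((1 - g) * (L%:R * M)) = (1 - g) * (k%:R * (L%:R * M))) by ring.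
apply: ler_wpM2l => //; apply: ler_pM => //; first by rewrite mulr_ge0.
exact: ler_wpM2r.
Qed.
Lemma disc_unique (R : realType) (n : nat) (E : rel 'I_n) (Vmax : pred 'I_n)
    (r : 'I_n -> 'I_n -> R) g v v' :
  0 <= g -> g < 1 -> disc_value E Vmax r g v -> disc_value E Vmax r g v' ->
  forall i, v i = v' i.
Proof.
move=> g0 g1 Hv Hv'.
set m := \big[Num.max/0]_(i : 'I_n) `|v i - v' i|.
have Hm : forall j, `|v j - v' j| <= m.
  by move=> j; apply: (le_bigmaxr (fun i => `|v i - v' i|) (mem_index_enum j) (erefl true)).
have m0 : 0 <= m by apply: bigmax_ge0.
have Hi : forall i, `|v i - v' i| <= g * m.
  move=> i; have := Hv i; have := Hv' i.
  case: (Vmax i) => -[[j2 E2 e2] H2] [[j1 E1 e1] H1];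
  have a1 := H1 j2 E2; have a2 := H2 j1 E1;
  have b1 := Hm j1; have b2 := Hm j2;
  move: b1 b2; rewrite !ler_norml => /andP[b1 b1'] /andP[b2 b2'];
  have c1 := ler_wpM2l g0 b1; have c1' := ler_wpM2l g0 b1';
  have c2 := ler_wpM2l g0 b2; have c2' := ler_wpM2l g0 b2';
  rewrite mulrN in c1 c2; rewrite mulrBr in c1 c1' c2 c2'; 
  apply/andP; split; lra.
have : m <= g * m by apply: bigmax_ler => //; apply: mulr_ge0.
move=> H i; have := Hi i; have : g * m <= 0 by nra.
move=> H1 H2; apply/eqP; rewrite -subr_eq0 -normr_eq0; apply/eqP.
by apply: le_anti; rewrite normr_ge0 (le_trans H2 H1).
Qed.
Lemma core (R : realType) (n : nat) (E : rel 'I_n) (Vmax : pred 'I_n)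
    (r : 'I_n -> 'I_n -> R) (pol : 'I_n -> 'I_n) (lam : R) (u : 'I_n -> R) (M g : R)
    (c : seq 'I_n) :
  policy_pair E pol -> ergodic_sol E Vmax r lam u ->
  (forall i, r i (pol i) + u (pol i) = lam + u i) ->
  (forall i, `|u i - u (pol i)| <= M) -> (0 < size c)%N -> (size c <= n)%N ->
  (forall x, x \in c -> pol x \in c) -> (forall x, x \in c -> iter (size c) pol x = x) ->
  (forall x y, x \in c -> y \in c -> (exists2 k, (k < size c)%N & y = iter k pol x)) ->
  (forall i, iter n pol i \in c) ->
  0 < g -> g < 1 ->
  (forall i j, E i j -> j != pol i ->
     (1 - g) * (4%:R * n%:R ^+ 2 * M) < `|reduced_weight r lam u i j|) ->
  unique_optimal_pair E Vmax r g pol.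
Proof.
move=> Hpp Hsol Ht HM L0 Ln Hcl Hper Hconn Hreach g0 g1 Gap.
set y := yv pol u g (size c).
have Hy : forall j, y j = (1 - g) * u j + g * y (pol j).
  by move=> j; apply: (yv_eq u (ltW g0) L0); apply: Hper.
have Hb := yv_bound HM (ltW g0) (ltW g1) L0 Ln Hcl Hper Hconn Hreach.
pose v i := lam + (1 - g) * (u i - y (pol i)).
have KF : forall i j, (1 - g) * r i j + g * v j - v i =
    (1 - g) * (reduced_weight r lam u i j + y (pol i) - y j).
  by move=> i j; rewrite /v /reduced_weight (Hy j); ring.
have g1' : 0 < 1 - g by rewrite subr_gt0.
have Kpol : forall i, (1 - g) * r i (pol i) + g * v (pol i) = v i.
  move=> i; apply/eqP; rewrite -subr_eq0 KF.
  have -> : reduced_weight r lam u i (pol i) = 0.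
    by rewrite /reduced_weight; have := Ht i; lra.
  by rewrite add0r subrr mulr0.
have Kd : forall i j, E i j -> j != pol i ->
    `|y (pol i) - y j| < `|reduced_weight r lam u i j|.
  by move=> i j Eij nj; apply: le_lt_trans (Hb _ _) (Gap _ _ Eij nj).
have Kne : forall i j, E i j -> j != pol i -> (1 - g) * r i j + g * v j != v i.
  move=> i j Eij nj; rewrite -subr_eq0 KF mulf_eq0 negb_or gt_eqF //=.
  apply/eqP => H0; have := Kd i j Eij nj.
  have -> : y (pol i) - y j = - reduced_weight r lam u i j.
    by apply/eqP; rewrite -subr_eq0 -H0; apply/eqP; ring.
  by rewrite normrN ltxx.
have Hdv : disc_value E Vmax r g v.
  move=> i; have Hs := fun j Eij => rw_sign (i:=i) (j:=j) Hsol Eij.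
  case Vi: (Vmax i) Hs => Hs; (split; first by exists (pol i); [exact: Hpp | exact: Kpol]);
    move=> j Eij; have [->|nj] := eqVneq j (pol i); rewrite ?Kpol //;
    have := Kd i j Eij nj; have := Hs j Eij.
  - move=> Hn Hlt; rewrite -subr_le0 KF pmulr_rle0 //; rewrite (ler0_norm Hn) in Hlt.
    by move: Hlt; rewrite ltr_norml => /andP[_ ?]; lra.
  - move=> Hn Hlt; rewrite -subr_ge0 KF pmulr_rge0 //; rewrite (ger0_norm Hn) in Hlt.
    by move: Hlt; rewrite ltr_norml => /andP[? _]; lra.
split; first by exists v.
move=> v' Hv'.
have Evv : forall i, v' i = v i.
  by move=> i; apply: (disc_unique (ltW g0) g1 Hv' Hdv).
split; first by move=> i; rewrite !Evv Kpol.
move=> pol' Hpp' Hpa i; apply/eqP; apply/negPn/negP => nj.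
have := Kne i (pol' i) (Hpp' i) nj; have := Hpa i; rewrite !Evv => ->.
by rewrite eqxx.
Qed.
Theorem mainTheorem17 (R : realType) (n : nat) (E : rel 'I_n) (Vmax : pred 'I_n)
    (r : 'I_n -> 'I_n -> R) (pol : 'I_n -> 'I_n) (lam : R) (u : 'I_n -> R) :
  (forall i : 'I_n, exists j, E i j) ->
  ergodic_graph_over E Vmax R ->
  policy_pair E pol -> in_Xi pol -> in_P E Vmax r pol ->
  ergodic_sol E Vmax r lam u ->
  (forall gamma : R,
     1 - (6 * n%:R ^+ 2 * Delta E r lam u)^-1 < gamma < 1 ->
     unique_optimal_pair E Vmax r gamma pol) /\
  (forall gs : R, blackwell_threshold E Vmax r gs ->
     gs <= 1 - (6 * n%:R ^+ 2 * Delta E r lam u)^-1).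
Proof.
move=> _ _ Hpp HXi HP Hsol.
have Ht := pol_tight HP Hsol.
have Hnz := pol_strict Hpp HP Hsol.
set M := numM E r lam.
have HM : forall i, `|u i - u (pol i)| <= M.
  move=> i; have -> : u i - u (pol i) = r i (pol i) - lam by have := Ht i; lra.
  exact: numM_ge (Hpp i).
have M0 : 0 <= M := numM_ge0 E r lam.
have [c [L0 Ln Hcl Hper [Hconn Hreach]]] := cyc_facts HXi.
have Hdiam : forall a b, `|u a - u b| <= 3%:R * n%:R * M.
  by move=> a b; apply: (u_diam HM Ln Hconn Hreach a b (leq0n n)).
set X := 6 * n%:R ^+ 2 * Delta E r lam u.
set N : R := n%:R.
have K2 : X^-1 = 0 \/ (0 < X^-1 < 1 /\ forall g, 1 - X^-1 < g < 1 -> 0 < g /\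
    (forall i j, E i j -> j != pol i ->
       (1 - g) * (4%:R * n%:R ^+ 2 * M) < `|reduced_weight r lam u i j|)).
  have [n0|n0] := eqVneq n 0%N.
    left; have N0 : N = 0 by rewrite /N n0.
    by rewrite /X -?/N N0 expr0n /= mulr0 mul0r invr0.
  have N1 : 1 <= N by rewrite /N ler1n lt0n.
  case: (Delta_cases E r lam u) => [[Hz HD]|[m0 [m0p [HD [Hle [i0 [j0 [E0 Hm0]]]]]]]].
    right; rewrite /X HD mulr1 -/N.
    have Xp : 1 < 6 * N ^+ 2 by nra.
    have Xi : 0 < (6 * N ^+ 2)^-1 < 1.
      by rewrite invr_gt0 invf_lt1 ?Xp ?andbT; apply: lt_trans Xp.
    split => // g /andP[Hg1 Hg2]; split.
      by move: Xi => /andP[_ Xi]; lra.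
    move=> i j Eij nj; have := Hnz i j Eij nj; by rewrite Hz ?eqxx.
  have [Mz|Mp] : M = 0 \/ 0 < M by move: M0; rewrite le_eqVlt => /orP[/eqP <-|->]; [left|right].
    by left; rewrite /X HD -/M Mz mul0r mulr0 invr0.
  right.
  set K := 6 * N ^+ 2 * M.
  have Kp : 0 < K.
    by rewrite /K; apply: mulr_gt0 => //; apply: mulr_gt0; [lra | apply: exprn_gt0; lra].
  have XE : X^-1 = m0 / K.
    by rewrite /X HD -/M -/N /K mulrA invf_div.
  have m0le : m0 <= (1 + 3%:R * N) * M.
    rewrite Hm0 /reduced_weight.
    have -> : r i0 j0 - lam + u j0 - u i0 = (r i0 j0 - lam) + (u j0 - u i0) by ring.
    apply: le_trans (ler_normD _ _) _.
    have := numM_ge r lam E0; have := Hdiam j0 i0; rewrite -/M -/N => h1 h2.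
    have -> : (1 + 3%:R * N) * M = M + 3%:R * N * M by ring.
    exact: lerD.
  have m0K : m0 < K.
    apply: le_lt_trans m0le _.
    have h : 1 + 3%:R * N < 6 * N ^+ 2 by rewrite expr2; nra.
    by rewrite /K ltr_pM2r.
  rewrite XE; have Hinv : 0 < m0 / K < 1.
    by rewrite divr_gt0 //= ltr_pdivrMr // mul1r.
  split => // g /andP[Hg1 Hg2]; split.
    by move: Hinv => /andP[_ h]; lra.
  have Hg : (1 - g) * K < m0 by rewrite -ltr_pdivlMr //; lra.
  move=> i j Eij nj.
  apply: (le_lt_trans _ (lt_le_trans Hg (Hle _ _ Eij (Hnz _ _ Eij nj)))).
  rewrite -/N /K; apply: ler_wpM2l; first lra.
  by nra.
have Key : X^-1 = 0 \/ (0 < X^-1 < 1 /\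
    forall g, 1 - X^-1 < g < 1 -> unique_optimal_pair E Vmax r g pol).
  case: K2 => [->|[H1 H2]]; [by left | right; split => // g Hg].
  have [g0 Hgap] := H2 g Hg.
  move: Hg => /andP[_ g1].
  exact: (core Hpp Hsol Ht HM L0 Ln Hcl Hper Hconn Hreach g0 g1 Hgap).
split.
  move=> g Hg; case: Key => [H0|[_ H]]; last exact: H.
  by move: Hg; rewrite H0 subr0 => /andP[a b]; lra.
move=> gs [/andP[gs0 gs1] [_ Hmin]].
case: Key => [H0|[Hinv H]].
  by rewrite H0 subr0; apply: ltW.
apply: Hmin.
  by move: Hinv => /andP[a b]; apply/andP; split; lra.
split.
  move=> sigma Hms [g0 [Hg0 [v0 [Hdv0 Hsv0]]]] g Hg.
  have [_ U0] := H g0 Hg0; have [U0a U0b] := U0 v0 Hdv0.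
  pose p' k := if Vmax k then sigma k else pol k.
  have Eq : forall k, Vmax k -> sigma k = pol k.
    move=> k Vk; have := U0b p' _ _ k; rewrite /p' Vk; apply.
      by move=> l; rewrite /p'; case: ifP => Vl; [exact: Hms | exact: Hpp].
    by move=> l; rewrite /p'; case: ifP => Vl; [exact: Hsv0 | exact: U0a].
  have [[v Hdv] U] := H g Hg.
  exists v; split => // i Vi; rewrite Eq //; exact: (U v Hdv).1 i.
move=> tau Hms [g0 [Hg0 [v0 [Hdv0 Hsv0]]]] g Hg.
have [_ U0] := H g0 Hg0; have [U0a U0b] := U0 v0 Hdv0.
pose p' k := if Vmax k then pol k else tau k.
have Eq : forall k, ~~ Vmax k -> tau k = pol k.
  move=> k Vk; have := U0b p' _ _ k; rewrite /p' (negbTE Vk); apply.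
    by move=> l; rewrite /p'; case: ifP => Vl; [exact: Hpp | apply: Hms; rewrite Vl].
  by move=> l; rewrite /p'; case: ifP => Vl; [exact: U0a | apply: Hsv0; rewrite Vl].
have [[v Hdv] U] := H g Hg.
exists v; split => // i Vi; rewrite Eq //; exact: (U v Hdv).1 i.
Qed.
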